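(* (1) For every $\mathbf{x}\in\mathcal{O}$, its code $(i_j)_{j\ge1}$ is the label of an infinite path in the automaton $\mathcal{M}$ starting at state $A$. (2) Conversely, let $(i_j)_{j\ge1}$ be the label of an infinite path in $\mathcal{M}$ starting at $A$. If $(i_j)$ is not eventually $0$, then there is exactly one infinite binary word $\mathbf{x}$ coded by $(i_j)$, and $\mathbf{x}\in\mathcal{O}$. If $(i_j)$ is eventually $0$, say $i_j=0$ for all $j\ge c$, then the infinite words coded by $(i_j)$ are exactly two, one with tail $\mathbf{t}$ (i.e. $\mathbf{y}_{c-1}=\mathbf{t}$) and one with tail $\overline{\mathbf{t}}$, and: if from step $c$ on the path cycles at state $A$ or between states $B$ and $D$, both of these words are in $\mathcal{O}$; if it cycles between $J$ and $K$, exactly the word with tail $\mathbf{t}$ is in $\mathcal{O}$; if it cycles between $G$ and $H$, exactly the word with tail $\overline{\mathbf{t}}$ is in $\mathcal{O}$.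
   Context: $\Sigma=\{0,1\}$. An overlap is a word $axaxa$ with $a\in\Sigma$, $x\in\Sigma^*$; a word is overlap-free if it has no overlap as a factor. $\mathcal{O}$ is the set of right-infinite binary overlap-free words, $\mu$ is the morphism $0\mapsto01$, $1\mapsto10$, $\mathbf{t}=\mu^\omega(0)$, $\overline{\mathbf{t}}=\mu^\omega(1)$. Let $p_0=\epsilon$, $p_1=0$, $p_2=00$, $p_3=1$, $p_4=11$. A sequence $(i_j)_{j\ge1}$ over $\{0,1,2,3,4\}$ codes an infinite binary word $\mathbf{x}$ if there are infinite binary words $\mathbf{y}_0=\mathbf{x},\mathbf{y}_1,\mathbf{y}_2,\dots$ with $\mathbf{y}_{j-1}=p_{i_j}\mu(\mathbf{y}_j)$ for all $j\ge1$. For $\mathbf{x}\in\mathcal{O}$, the code of $\mathbf{x}$ is the unique sequence $(i_j)$ coding $\mathbf{x}$ with all $\mathbf{y}_j\in\mathcal{O}$ (which exists and is unique by the Restivo–Salemi factorization: each $\mathbf{x}\in\mathcal{O}$ is uniquely $p\mu(\mathbf{y})$ with $p\in\{p_0,\dots,p_4\}$, $\mathbf{y}\in\mathcal{O}$). The automaton $\mathcal{M}$ has states $A,B,C,D,E,F,G,H,I,J,K$, input alphabet $\{0,1,2,3,4\}$, and exactly the following transitions: $A\xrightarrow{0}A$, $A\xrightarrow{1}B$, $A\xrightarrow{2}C$, $A\xrightarrow{3}D$, $A\xrightarrow{4}E$; $B\xrightarrow{0}D$, $B\xrightarrow{1}B$, $B\xrightarrow{3}E$; $D\xrightarrow{0}B$,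 $D\xrightarrow{1}C$, $D\xrightarrow{3}D$; $C\xrightarrow{0}F$, $C\xrightarrow{3}E$; $E\xrightarrow{0}I$, $E\xrightarrow{1}C$; $F\xrightarrow{3}G$; $I\xrightarrow{1}J$; $J\xrightarrow{0}K$, $J\xrightarrow{1}B$; $K\xrightarrow{0}J$, $K\xrightarrow{1}C$; $G\xrightarrow{0}H$, $G\xrightarrow{3}D$; $H\xrightarrow{0}G$, $H\xrightarrow{3}E$. *)

(* Defs.v *)
From mathcomp Require Import all_boot.
Set Implicit Arguments. Unset Strict Implicit. Unset Printing Implicit Defensive.

(* Binary alphabet Sigma = {0,1} encoded as bool: 0 = false, 1 = true.
   Right-infinite binary words are functions nat -> bool. *)
Definition word := nat -> bool.

Definition factor_at (w : word) (i : nat) (u : seq bool) : Prop :=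
  forall k, k < size u -> w (i + k) = nth false u k.

Definition has_overlap (w : word) : Prop :=
  exists (i : nat) (a : bool) (x : seq bool),
    factor_at w i (a :: x ++ a :: x ++ [:: a]).

Definition overlap_free (w : word) : Prop := ~ has_overlap w.

Definition mu_seq (s : seq bool) : seq bool :=
  flatten (map (fun b => [:: b; ~~ b]) s).

Definition mu (y : word) : word :=
  fun n => if odd n then ~~ y n./2 else y n./2.

(* t = mu^omega(0) and tbar = mu^omega(1): the n-th letter is the n-th letter
   of mu^(n+1)(a), which has length 2^(n+1) > n. *)
Definition thue : word := fun n => nth false (iter n.+1 mu_seq [:: false]) n.
Definition thue_bar : word := fun n => nth false (iter n.+1 mu_seq [:: true]) n.

Definition pref (i : nat) : seq bool :=
  match i with
  | 0 => [::]
  | 1 => [:: false]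
  | 2 => [:: false; false]
  | 3 => [:: true]
  | 4 => [:: true; true]
  | _ => [::]
  end.

Definition prepend (s : seq bool) (w : word) : word :=
  fun n => if n < size s then nth false s n else w (n - size s).

(* Sequences (i_j)_{j>=1} are represented as s : nat -> nat with s j = i_(j+1);
   sequences (y_j)_{j>=0} as ys : nat -> word with ys j = y_j.
   The relation y_(j-1) = p_(i_j) mu(y_j) (j >= 1) becomes
   ys j = p_(s j) mu(ys (j+1)) (j >= 0). *)
Definition coding_seq (s : nat -> nat) (ys : nat -> word) : Prop :=
  (forall j, s j < 5) /\
  (forall j, ys j = prepend (pref (s j)) (mu (ys j.+1))).

Definition codes (s : nat -> nat) (x : word) : Prop :=
  exists ys : nat -> word, ys 0 = x /\ coding_seq s ys.

Definition codes_with (s : nat -> nat) (c : nat) (w : word) (x : word) : Prop :=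
  exists ys : nat -> word, ys 0 = x /\ ys c = w /\ coding_seq s ys.

Definition is_code (s : nat -> nat) (x : word) : Prop :=
  exists ys : nat -> word,
    ys 0 = x /\ coding_seq s ys /\ (forall j, overlap_free (ys j)).

Inductive state := A | B | C | D | E | F | G | H | I | J | K.

Definition delta (q : state) (a : nat) : option state :=
  match q, a with
  | A, 0 => Some A | A, 1 => Some B | A, 2 => Some C | A, 3 => Some D | A, 4 => Some E
  | B, 0 => Some D | B, 1 => Some B | B, 3 => Some E
  | D, 0 => Some B | D, 1 => Some C | D, 3 => Some D
  | C, 0 => Some F | C, 3 => Some E
  | E, 0 => Some I | E, 1 => Some C
  | F, 3 => Some G
  | I, 1 => Some J
  | J, 0 => Some K | J, 1 => Some B
  | K, 0 => Some J | K, 1 => Some C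
  | G, 0 => Some H | G, 3 => Some D
  | H, 0 => Some G | H, 3 => Some E
  | _, _ => None
  end.

(* q is an infinite path in M starting at A, labelled by s
   (q j = state after reading i_1 ... i_j) *)
Definition path_from_A (s : nat -> nat) (q : nat -> state) : Prop :=
  q 0 = A /\ forall j, delta (q j) (s j) = Some (q j.+1).

Definition is_path_label (s : nat -> nat) : Prop := exists q, path_from_A s q.

Definition zero_from (s : nat -> nat) (c : nat) : Prop := forall j, c <= j -> s j = 0.

(* Main.v *)
Require Import Defs.
From mathcomp Require Import all_boot.
From Stdlib Require Import Lia.
Set Implicit Arguments. Unset Strict Implicit. Unset Printing Implicit Defensive.

Ltac slia := 
  repeat match goal with
  | H : is_true (_ <= _) |- _ => apply (elimT leP) in H
  | H : (_ <= _) = false |- _ => apply negbT in H; rewrite -ltnNge in H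
  | H : (_ < _) = false |- _ => apply negbT in H; rewrite -leqNgt in H
  | H : is_true (_ == _) |- _ => apply (elimT eqP) in H
  | H : (_ == _) = false |- _ => apply negbT in H; apply (elimN eqP) in H
  end;
  repeat match goal with
  | |- is_true (_ <= _) => apply/leP
  | |- is_true (_ == _) => apply/eqP
  | |- (_ <= _) = false => apply/negbTE; rewrite -ltnNge
  | |- (_ < _) = false => apply/negbTE; rewrite -leqNgt
  | |- is_true (~~ (_ <= _)) => rewrite -ltnNge
  end;
  repeat (progress (rewrite <- ?plusE, <- ?minusE, <- ?multE in * )); lia.

Definition ovp (w : word) (i p : nat) : Prop :=
  forall k, k <= p -> w (i + k) = w (i + k + p).

Definition NO (w : word) : Prop := forall i p, 0 < p -> ~ ovp w i p.

Lemma nth_ovl (v : seq bool) a k : 0 < size v -> nth false v 0 = a -> k <= size v ->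
  nth false (v ++ v ++ [:: a]) k = nth false (v ++ v ++ [:: a]) (k + size v).
Proof.
move=> Hv Ha Hk.
rewrite [LHS]nth_cat [RHS]nth_cat.
have -> : (k + size v < size v) = false by rewrite ltnNge leq_addl.
rewrite addnK.
case: (ltnP k (size v)) => Hk2.
  by rewrite nth_cat Hk2.
have -> : k = size v by apply/eqP; rewrite eqn_leq Hk Hk2.
by rewrite subnn !nth_cat Hv ltnn subnn.

Qed.

Lemma ovp_of_overlap w : has_overlap w -> exists i p, 0 < p /\ ovp w i p.
Proof.
case=> i [a [x Hf]]; rewrite /factor_at in Hf.
exists i, (size x).+1; split => // k Hk.
have Hs : size (a :: x ++ a :: x ++ [:: a]) = (size x).+1 + (size x).+1 + 1.
  by rewrite /= !size_cat /= size_cat /= !addn1 !addnS !addSn.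
rewrite -addnA (Hf k) ?(Hf (k + (size x).+1)).
- by rewrite -cat_cons -cat_cons (nth_ovl (v := a :: x)).
- by rewrite Hs addn1 ltnS; apply: leq_add.
- by rewrite Hs addn1 ltnS; apply: (leq_trans Hk); rewrite leq_addr.
Qed.

Lemma overlap_of_ovp w i p : 0 < p -> ovp w i p -> has_overlap w.
Proof.
case: p => // p _ Ho.
exists i, (w i), (mkseq (fun k => w (i + k.+1)) p).
set x := mkseq _ _.
have Hv : forall k, k < p.+1 -> nth false (w i :: x) k = w (i + k).
  case=> [_|k Hk]; first by rewrite addn0.
  by rewrite /= /x nth_mkseq // addnS.
have Hsx : size x = p by rewrite size_mkseq.
move=> k Hk; move: Hk; rewrite /= !size_cat /= size_cat /= Hsx => Hk.
rewrite -cat_cons nth_cat /= Hsx.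
case: (ltnP k p.+1) => H1; first by rewrite Hv.
rewrite -cat_cons nth_cat /= Hsx.
case: (ltnP (k - p.+1) p.+1) => H2.
  rewrite Hv // (Ho (k - p.+1)); last by slia.
  by have -> : i + (k - p.+1) + p.+1 = i + k by slia.
have Hk2 : k = p.+1 + p.+1 by slia.
rewrite Hk2 addKn subnn /=.
have E0 := Ho 0 (leq0n _); rewrite addn0 in E0.
have E1 := Ho p.+1 (leqnn _).
by rewrite E0 E1 addnA.
Qed.

Lemma ofree_NO w : overlap_free w <-> NO w.
Proof.
split.
  by move=> Hf i p Hp Ho; apply: Hf; apply: (overlap_of_ovp Hp Ho).
by move=> HN Hov; case: (ovp_of_overlap Hov) => i [p [Hp Ho]]; exact: (HN i p Hp Ho).
Qed.

Lemma ovp_ext w w' i p : (forall n, w n = w' n) -> ovp w i p -> ovp w' i p.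
Proof. by move=> E Ho k Hk; rewrite -!E Ho. Qed.

Lemma NO_ext w w' : (forall n, w n = w' n) -> NO w -> NO w'.
Proof. by move=> E HN i p Hp Ho; apply: (HN i p Hp); apply: ovp_ext Ho => n; rewrite E. Qed.

Lemma mu_add2 w n k : mu w (n + k.*2) = if odd n then ~~ w (n./2 + k) else w (n./2 + k).
Proof.
rewrite /mu oddD odd_double addbF halfD odd_double andbF add0n doubleK //.
Qed.

Lemma even_half m : ~~ odd m -> m = (m./2).*2.
Proof. by move=> Hm; rewrite -{1}(odd_double_half m) (negbTE Hm). Qed.

Lemma mu_alt w m : ~~ odd m -> mu w m != mu w m.+1.
Proof.
move=> Hm; rewrite (even_half Hm) /mu -[(m./2).*2.+1]/(true + (m./2).*2).
by rewrite half_bit_double odd_double /= oddD odd_double /= doubleK; case: (w _).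
Qed.

Lemma mu_eq_odd w m : mu w m = mu w m.+1 -> odd m.
Proof. by move=> E; apply/negPn/negP => /(mu_alt w); rewrite E eqxx. Qed.

Lemma neq_negb (a b : bool) : a != b -> b = ~~ a.
Proof. by case: a; case: b. Qed.

Lemma mu_ovp_even w i p : 0 < p -> ovp (mu w) i p -> ~~ odd p.
Proof.
move=> Hp Ho; apply/negP => Hodd.
have Halt : forall k, k < p + p -> mu w (i+k) != mu w (i+k).+1.
  move=> k Hk; case Hik: (odd (i+k)); last by apply: mu_alt; rewrite Hik.
  case: (ltnP k p) => Hkp.
  - rewrite (Ho k (ltnW Hkp)) -addnS (Ho k.+1 Hkp) addnS addSn.
    by apply: mu_alt; rewrite oddD Hik Hodd.
  - have Hk' : i + k = i + (k - p) + p by slia.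
    have Hk'' : (i + k).+1 = i + (k - p).+1 + p by slia.
    rewrite Hk'' Hk' -(Ho (k - p)); last by slia.
    rewrite -(Ho (k - p).+1); last by slia.
    rewrite addnS; apply: mu_alt.
    have : odd (i + k) = odd (i + (k - p)) (+) odd p by rewrite Hk' oddD.
    by rewrite Hik Hodd; case: (odd _).
have Hpar : forall k, k <= p + p -> mu w (i + k) = odd k (+) mu w i.
  elim=> [|k IH Hk]; first by rewrite addn0.
  rewrite addnS (neq_negb (Halt k Hk)) IH ?(ltnW Hk) //=.
  by case: (odd k); case: (mu w i).
have := Ho 0 (leq0n _); rewrite addn0 Hpar ?leq_addr //.
by rewrite Hodd; case: (mu w i).
Qed.

Lemma mu_ovp w i p : 0 < p -> ovp (mu w) i p ->
  exists q, [/\ p = q.*2, 0 < q & ovp w i./2 q].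
Proof.
move=> Hp Ho.
have He := mu_ovp_even Hp Ho.
have Hp2 := even_half He.
set q := p./2 in Hp2; clearbody q; subst p.
exists q; split => //; first by rewrite double_gt0 in Hp.
move=> k Hk.
have := Ho k.*2; rewrite leq_double => /(_ Hk).
rewrite -addnA -doubleD !mu_add2 addnA.
by case: (odd i) => // /negb_inj.
Qed.

Lemma half_addD m a : (m + a.*2)./2 = m./2 + a.
Proof. by rewrite halfD odd_double andbF add0n doubleK. Qed.

Lemma ovp_mu w (e : bool) a q : ovp w a q -> ovp (mu w) (e + a.*2) q.*2.
Proof.
move=> Ho k Hk.
rewrite -addnA mu_add2 {1}/mu.
have -> : e + (a.*2 + k) = (e + k) + a.*2 by slia.
rewrite half_addD.
have Hj : (e + k)./2 <= q.
  have : (e + k) <= true + q.*2 by case: e; rewrite /= ?add1n ?ltnS // add0n (leq_trans Hk).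
  by move/half_leq; rewrite half_bit_double.
by rewrite [(e + k)./2 + a]addnC (Ho _ Hj).
Qed.

Definition sh (w : word) : word := fun n => w n.+1.

Lemma ovp_sh w i p : ovp (sh w) i p -> ovp w i.+1 p.
Proof. by move=> Ho k Hk; have := Ho k Hk; rewrite /sh !addSn. Qed.

Lemma ovp_unsh w i p : ovp w i.+1 p -> ovp (sh w) i p.
Proof. by move=> Ho k Hk; have := Ho k Hk; rewrite /sh !addSn. Qed.

Lemma P0 w n : prepend [::] w n = w n.
Proof. by rewrite /prepend /= subn0. Qed.

Lemma P1 b y n : prepend [:: b] (mu y) n = sh (mu (prepend [:: ~~ b] y)) n.
Proof.
case: n => [|m]; first by rewrite /prepend /sh /mu /= negbK.
by rewrite /prepend /sh /mu /= negbK subn1 /= subn1.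
Qed.

Lemma P2 b y n : prepend [:: ~~ b; b] (mu y) n = mu (prepend [:: ~~ b] y) n.
Proof.
case: n => [|[|m]]; rewrite /prepend /mu /= ?negbK //.
by rewrite subn1 subn2.
Qed.

Lemma Pcat c p w n : prepend c (prepend p w) n = prepend (c ++ p) w n.
Proof.
rewrite /prepend size_cat nth_cat.
case: (ltnP n (size c)) => H1; first by rewrite ltn_addr.
case: (ltnP (n - size c) (size p)) => H2.
  by have -> : n < size c + size p by slia.
have -> : (n < size c + size p) = false by slia.
by rewrite subnDA.
Qed.

Lemma ovp_c0 y i p : 0 < p -> ovp (mu y) i p ->
  exists i' q, [/\ p = q.*2, 0 < q & ovp y i' q].
Proof. by move=> Hp Ho; case: (mu_ovp Hp Ho) => q [? ? ?]; exists i./2, q. Qed.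

Lemma ovp_c1 b y i p : 0 < p -> ovp (prepend [:: b] (mu y)) i p ->
  exists i' q, [/\ p = q.*2, 0 < q & ovp (prepend [:: ~~ b] y) i' q].
Proof.
move=> Hp Ho.
have Ho' : ovp (mu (prepend [:: ~~ b] y)) i.+1 p.
  by apply: ovp_sh; apply: ovp_ext Ho => n; rewrite P1.
by case: (mu_ovp Hp Ho') => q [? ? ?]; exists i.+1./2, q.
Qed.

Lemma ovp_c2 b y i p : 0 < p -> ovp (prepend [:: ~~ b; b] (mu y)) i p ->
  exists i' q, [/\ p = q.*2, 0 < q & ovp (prepend [:: ~~ b] y) i' q].
Proof.
move=> Hp Ho.
have Ho' : ovp (mu (prepend [:: ~~ b] y)) i p.
  by apply: ovp_ext Ho => n; rewrite P2.
by case: (mu_ovp Hp Ho') => q [? ? ?]; exists i./2, q.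
Qed.

Lemma NO_c0 y : NO (mu y) <-> NO y.
Proof.
split => HN i p Hp Ho.
  have := ovp_mu false Ho; rewrite add0n => Ho'.
  by apply: (HN _ _ _ Ho'); rewrite double_gt0.
by case: (ovp_c0 Hp Ho) => i' [q [_ Hq Ho']]; apply: (HN _ _ Hq Ho').
Qed.

Lemma NO_c1 b y : NO (prepend [:: b] (mu y)) <-> NO (prepend [:: ~~ b] y).
Proof.
split => HN i p Hp Ho.
  have := ovp_mu true Ho; rewrite add1n => Ho'.
  have Ho2 := ovp_unsh Ho'.
  apply: (HN _ (p.*2)); first by rewrite double_gt0.
  by apply: ovp_ext Ho2 => n; rewrite P1.
by case: (ovp_c1 Hp Ho) => i' [q [_ Hq Ho']]; apply: (HN _ _ Hq Ho').
Qed.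

Lemma NO_c2 b y : NO (prepend [:: ~~ b; b] (mu y)) <-> NO (prepend [:: ~~ b] y).
Proof.
split => HN i p Hp Ho.
  have := ovp_mu false Ho; rewrite add0n => Ho'.
  apply: (HN _ (p.*2)); first by rewrite double_gt0.
  by apply: ovp_ext Ho' => n; rewrite P2.
by case: (ovp_c2 Hp Ho) => i' [q [_ Hq Ho']]; apply: (HN _ _ Hq Ho').
Qed.

Lemma ovp_dec w i p : all (fun k => w (i+k) == w (i+k+p)) (iota 0 p.+1) -> ovp w i p.
Proof.
move/allP=> H k Hk; apply/eqP; apply: H.
by rewrite mem_iota add0n ltnS Hk.
Qed.

Lemma Pdbl b y n : prepend [:: b] (mu y) n = sh (prepend [:: b; b] (mu y)) n.
Proof.
case: n => [|m]; rewrite /prepend /sh //=.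
Qed.

Lemma NO_bad1 b w : ~ NO (prepend [:: b; b; b] w).
Proof.
move=> HN; apply: (HN 0 1) => //; apply: ovp_dec.
by rewrite /= /prepend /= eqxx.
Qed.


Ltac subst_y := repeat match goal with H : ?y ?n = _ |- context [?y ?n] => rewrite H end.
Ltac kill_ovp HN :=
  exfalso; first [ (apply: (HN 0 1); [done | apply: ovp_dec; rewrite /= /prepend /mu /=; subst_y; done])
        | (apply: (HN 1 1); [done | apply: ovp_dec; rewrite /= /prepend /mu /=; subst_y; done])
        | (apply: (HN 2 1); [done | apply: ovp_dec; rewrite /= /prepend /mu /=; subst_y; done])
        | (apply: (HN 3 1); [done | apply: ovp_dec; rewrite /= /prepend /mu /=; subst_y; done])
        | (apply: (HN 4 1); [done | apply: ovp_dec; rewrite /= /prepend /mu /=; subst_y; done])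
        | (apply: (HN 0 2); [done | apply: ovp_dec; rewrite /= /prepend /mu /=; subst_y; done])
        | (apply: (HN 1 2); [done | apply: ovp_dec; rewrite /= /prepend /mu /=; subst_y; done])
        | (apply: (HN 2 2); [done | apply: ovp_dec; rewrite /= /prepend /mu /=; subst_y; done])
        | (apply: (HN 3 2); [done | apply: ovp_dec; rewrite /= /prepend /mu /=; subst_y; done])
        | (apply: (HN 4 2); [done | apply: ovp_dec; rewrite /= /prepend /mu /=; subst_y; done])
        | (apply: (HN 0 3); [done | apply: ovp_dec; rewrite /= /prepend /mu /=; subst_y; done])
        | (apply: (HN 1 3); [done | apply: ovp_dec; rewrite /= /prepend /mu /=; subst_y; done])
        | (apply: (HN 2 3); [done | apply: ovp_dec; rewrite /= /prepend /mu /=; subst_y; done])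
        | (apply: (HN 3 3); [done | apply: ovp_dec; rewrite /= /prepend /mu /=; subst_y; done])
        | (apply: (HN 4 3); [done | apply: ovp_dec; rewrite /= /prepend /mu /=; subst_y; done]) ].

Lemma NO_bad2 b y : ~ NO (prepend [:: b; ~~ b; ~~ b] (mu y)).
Proof.
move=> HN; case E0: (y 0); case E1: (y 1); case: b HN => HN; kill_ovp HN.
Qed.

Lemma NO_dbl b y : NO (prepend [:: b; b] (mu y)) <->
  NO (prepend [:: ~~ b] y) /\ [&& y 0 == ~~ b, y 1 == b & y 2 == ~~ b].
Proof.
split.
  move=> HN.
  have H1 : NO (prepend [:: b] (mu y)).
    move=> i p Hp Ho; apply: (HN i.+1 p Hp); apply: ovp_sh.
    by apply: ovp_ext Ho => n; rewrite Pdbl.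
  have H2 := (proj1 (NO_c1 b y) H1).
  split => //.
  case E0: (y 0); case E1: (y 1); case E2: (y 2); case: b HN H1 H2 => HN H1 H2 //=;
    first [kill_ovp HN | kill_ovp H2].
case=> HN /and3P [/eqP E0 /eqP E1 /eqP E2] i p Hp Ho.
case: i Ho => [|i] Ho; last first.
  apply: (proj2 (NO_c1 b y) HN i p Hp); apply: ovp_ext (ovp_unsh Ho) => n.
  by rewrite Pdbl.
have Wn : forall n, prepend [:: b; b] (mu y) n.+2 = mu y n.
  by move=> n; rewrite /prepend /= subn2.
case: p Hp Ho => [|[|[|[|m]]]] // _ Ho.
- by have := Ho 1 isT; rewrite /prepend /mu /= E0; clear -E0 E2; case: b E0 E2.
- by have := Ho 0 isT; rewrite /prepend /mu /= E0; clear -E0 E2; case: b E0 E2.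
- by have := Ho 3 isT; rewrite /prepend /mu /= E0 E2; clear -E0 E2; case: b E0 E2.
have A0 := Ho 0 isT; have A1 := Ho 1 isT; have A3 := Ho 3 isT; have A4 := Ho 4 isT.
rewrite !add0n in A0 A1 A3 A4.
rewrite Wn in A0; rewrite Wn in A1.
have A3' : prepend [:: b; b] (mu y) (3 + m.+4) = mu y (m.+4.+1) by rewrite -Wn.
have A4' : prepend [:: b; b] (mu y) (4 + m.+4) = mu y (m.+4.+2) by rewrite -Wn.
rewrite A3' in A3; rewrite A4' in A4.
have O1 : odd m.+2.
  apply: (mu_eq_odd (w := y)); rewrite -A0 -A1.
  by rewrite /prepend.
have O2 : odd m.+4.+1.
  apply: (mu_eq_odd (w := y)); rewrite -A3 -A4.
  by rewrite /prepend /mu /= E0 E1 negbK.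
by move: O1 O2 => /=; case: (odd m).
Qed.

Definition ctx (q : state) : seq bool :=
  match q with
  | A => [::]
  | B | C | H | I | J => [:: true]
  | D | E | F | G | K => [:: false]
  end.

Definition pre (q : state) (y : word) : bool :=
  match q with
  | A | B | D => true
  | C => [&& y 0, ~~ y 1 & y 2]
  | E => [&& ~~ y 0, y 1 & ~~ y 2]
  | F => y 0 && y 1
  | G | H => y 0
  | I => ~~ y 0 && ~~ y 1
  | J | K => ~~ y 0
  end.

Definition Sem (q : state) (y : word) : Prop := NO (prepend (ctx q) y) /\ pre q y.

Definition cls (c : seq bool) (y : word) : Prop :=
  match c with
  | [::] => NO (prepend [::] y)
  | [:: b] => NO (prepend [:: ~~ b] y)
  | [:: b1; b2] => if b1 == b2 then
       NO (prepend [:: ~~ b1] y) /\ [&& y 0 == ~~ b1, y 1 == b1 & y 2 == ~~ b1]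
     else NO (prepend [:: b1] y)
  | _ => False
  end.

Definition okctx (c : seq bool) : bool :=
  match c with
  | [:: b1; b2; b3] => b2 == b3
  | [:: _, _, _, _ & _] => false
  | _ => true
  end.

Lemma NO_prep0 y : NO (prepend [::] y) <-> NO y.
Proof. by split; apply: NO_ext => n; rewrite P0. Qed.

Lemma cls_ok c y : okctx c -> (NO (prepend c (mu y)) <-> cls c y).
Proof.
case: c => [|b1 [|b2 [|b3 [|b4 c]]]] //= Hok.
- by rewrite !NO_prep0 NO_c0.
- have := NO_c1 b1 y; done.
- case: eqP => [<-|/eqP Hne]; first exact: NO_dbl.
  have -> : b2 = ~~ b1 by move: Hne; case: b1; case: b2.
  by have := NO_c2 (~~ b1) y; rewrite negbK.
- split => // HN.
  move/eqP: Hok => Hok; subst b3.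
  case: (eqVneq b1 b2) => [Eb|Hne]; first by rewrite -Eb in HN; exact: (NO_bad1 HN).
  have Eb : b2 = ~~ b1 by clear HN; move: Hne; case: b1; case: b2.
  by rewrite Eb in HN; apply: (NO_bad2 HN).
Qed.

Ltac fin := split; intros; repeat match goal with H : _ /\ _ |- _ => destruct H end;
  repeat split; try done; try discriminate.

Definition nextP (q : state) (a : nat) (y : word) : Prop :=
  match delta q a with Some q' => Sem q' y | None => False end.

Lemma trans_lem q a y : a < 5 ->
  (Sem q (prepend (pref a) (mu y)) <-> nextP q a y).
Proof.
move=> Ha.
have E : NO (prepend (ctx q) (prepend (pref a) (mu y))) <-> NO (prepend (ctx q ++ pref a) (mu y)).
  by split; apply: NO_ext => n; rewrite Pcat.
rewrite /Sem E cls_ok; last by clear E; case: q; case: a Ha => [|[|[|[|[|]]]]].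
clear E.
case: q; case: a Ha => [|[|[|[|[|]]]]] // _; rewrite /nextP /Sem /cls /= /prepend /mu /=;
  case E0: (y 0); case E1: (y 1); case E2: (y 2); rewrite /= ?E0 ?E1 ?E2 /=; fin.

Qed.

Lemma size_mu_seq s : size (mu_seq s) = (size s).*2.
Proof. by elim: s => //= b s IH; rewrite -/(mu_seq s) IH doubleS. Qed.

Lemma nth_mu_seq s n : n < (size s).*2 ->
  nth false (mu_seq s) n = if odd n then ~~ nth false s n./2 else nth false s n./2.
Proof.
elim: s n => [|b s IH] [|[|n]] //= Hn.
rewrite -/(mu_seq s) IH; last by move: Hn; rewrite doubleS !ltnS.
by rewrite negbK.
Qed.

Definition TMk k a := iter k mu_seq [:: a].

Lemma size_TMk k a : size (TMk k a) = 2 ^ k.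
Proof. by elim: k => //= k IH; rewrite size_mu_seq IH expnS mul2n. Qed.

Lemma TMkS k a : TMk k.+1 a = mu_seq (TMk k a).
Proof. by []. Qed.

Lemma TMk_succ k a n : n < 2 ^ k -> nth false (TMk k.+1 a) n = nth false (TMk k a) n.
Proof.
elim: k n => [|k IH] n Hn.
  by case: n Hn.
have Hh : n./2 < 2 ^ k by rewrite ltn_half_double -mul2n -expnS.
rewrite [TMk k.+2 a]TMkS (nth_mu_seq (s := TMk k.+1 a)); last first.
  by rewrite size_TMk -mul2n -expnS; apply: (leq_trans Hn); rewrite leq_exp2l.
rewrite IH // TMkS (nth_mu_seq (s := TMk k a)) //.
by rewrite size_TMk -mul2n -expnS.
Qed.

Lemma TMk_stable k m a n : n < 2 ^ k -> nth false (TMk (m + k) a) n = nth false (TMk k a) n.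
Proof.
move=> Hn; elim: m => // m IH.
by rewrite addSn TMk_succ // (leq_trans Hn) // leq_exp2l // leq_addl.
Qed.

Definition Tw (a : bool) : word := fun n => nth false (TMk n.+1 a) n.

Lemma thue_Tw n : thue n = Tw false n. Proof. by []. Qed.
Lemma thue_bar_Tw n : thue_bar n = Tw true n. Proof. by []. Qed.

Lemma Tw_nth a k n : n < 2 ^ k -> Tw a n = nth false (TMk k a) n.
Proof.
move=> Hn; rewrite /Tw.
have Hn1 : n < 2 ^ n.+1 by apply: (leq_trans (ltn_expl n (isT : 1 < 2))); rewrite leq_exp2l.
case: (leqP k n.+1) => Hk.
  by rewrite -(subnK Hk) TMk_stable.
by rewrite -(subnK (ltnW Hk)) TMk_stable.
Qed.

Lemma Tw_mu a n : Tw a n = mu (Tw a) n.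
Proof.
have Hn : n < 2 ^ n by apply: ltn_expl.
rewrite (Tw_nth a (k := n.+1)); last by apply: (leq_trans Hn); rewrite leq_exp2l.
rewrite TMkS nth_mu_seq; last by rewrite size_TMk -mul2n -expnS; apply: (leq_trans Hn); rewrite leq_exp2l.
rewrite /mu (Tw_nth a (k := n)) //.
by apply: (leq_ltn_trans _ Hn); rewrite -divn2 leq_div.
Qed.

Lemma Tw0 a : Tw a 0 = a. Proof. by []. Qed.

Lemma fix_Tw (y : word) : (forall n, y n = mu y n) -> forall n, y n = Tw (y 0) n.
Proof.
move=> Hy n; elim: n {-2}n (leqnn n) => [|m IH] n Hn.
  by case: n Hn.
case: n Hn => [|n] Hn; first by [].
rewrite Hy Tw_mu /mu IH //.
by rewrite -ltnS (leq_ltn_trans _ Hn) // leq_half_double ltnS -addnn leq_addr.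
Qed.

Lemma NO_Tw_all a p : 0 < p -> forall i,
  ~ ovp (Tw a) i p /\ forall b, ~ ovp (prepend [:: b] (Tw a)) i p.
Proof.
elim: p {-2}p (leqnn p) => [|m IH] p Hp Hp0; first by case: p Hp Hp0.
move=> i; split.
  move=> Ho.
  have Ho' : ovp (mu (Tw a)) i p by apply: ovp_ext Ho => n; rewrite -Tw_mu.
  case: (ovp_c0 Hp0 Ho') => i' [q [Eq Hq Ho2]].
  have Hqm : q <= m by move: Hp; rewrite Eq -addnn => Hp2; slia.
  by case: (IH q Hqm Hq i') => /(_ Ho2).
move=> b Ho.
have Ho' : ovp (prepend [:: b] (mu (Tw a))) i p.
  by apply: ovp_ext Ho => n; rewrite /prepend /= -Tw_mu.
case: (ovp_c1 Hp0 Ho') => i' [q [Eq Hq Ho2]].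
have Hqm : q <= m by move: Hp; rewrite Eq -addnn => Hp2; slia.
by case: (IH q Hqm Hq i') => _ /(_ (~~ b)).
Qed.

Lemma NO_Tw a : NO (Tw a).
Proof. by move=> i p Hp; case: (NO_Tw_all a Hp i). Qed.

Lemma NO_Tw1 a b : NO (prepend [:: b] (Tw a)).
Proof. by move=> i p Hp; case: (NO_Tw_all a Hp i) => _ /(_ b). Qed.

Lemma prepend_mu_ext p w w' n : (forall m, w m = w' m) ->
  prepend p (mu w) n = prepend p (mu w') n.
Proof. by move=> E; rewrite /prepend /mu E. Qed.

Lemma Sem_ext q w w' : (forall n, w n = w' n) -> Sem q w -> Sem q w'.
Proof.
move=> E [HN Hp]; split.
  by apply: NO_ext HN => n; rewrite /prepend E.
by move: Hp; case: q {HN}; rewrite /pre ?E.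
Qed.

Lemma SemA w : Sem A w <-> NO w.
Proof. by rewrite /Sem /= NO_prep0; split => [[]|]. Qed.

Fixpoint Gw (s : nat -> nat) (j k : nat) (z : word) : word :=
  match k with
  | 0 => z
  | k.+1 => prepend (pref (s j)) (mu (Gw s j.+1 k z))
  end.

Lemma Gw_ext s j k z z' : (forall n, z n = z' n) -> forall n, Gw s j k z n = Gw s j k z' n.
Proof.
elim: k j => [|k IH] j E n /=; first exact: E.
by apply: prepend_mu_ext => m; apply: IH.
Qed.

Lemma delta_lt5 q a q' : delta q a = Some q' -> a < 5.
Proof. by case: q; do 5? [case: a => [|a] //]. Qed.

Section Paths.
Variables (s : nat -> nat) (q : nat -> state).
Hypothesis Hq : forall j, delta (q j) (s j) = Some (q j.+1).

Lemma s_lt5 j : s j < 5.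
Proof. exact: (delta_lt5 (Hq j)). Qed.

Lemma Sem_up k : forall j z, Sem (q (j + k)) z -> Sem (q j) (Gw s j k z).
Proof.
elim: k => [|k IH] j z; first by rewrite addn0.
move=> HS /=.
apply/(trans_lem _ _ (s_lt5 j)); rewrite /nextP Hq.
by apply: IH; rewrite addSn -addnS.
Qed.

Lemma Sem_down k : forall j z, Sem (q j) (Gw s j k z) -> Sem (q (j + k)) z.
Proof.
elim: k => [|k IH] j z; first by rewrite addn0.
move=> /= /(trans_lem _ _ (s_lt5 j)); rewrite /nextP Hq => HS.
by rewrite addnS -addSn; apply: IH.
Qed.
End Paths.

Fixpoint qf (s : nat -> nat) (j : nat) : state :=
  match j with
  | 0 => A
  | j.+1 => match delta (qf s j) (s j) with Some q' => q' | None => A end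
  end.

Lemma part1 (x : word) (s : nat -> nat) : overlap_free x -> is_code s x -> is_path_label s.
Proof.
move=> Hx [ys [E0 [[Hlt Hc] _]]].
have HS : forall j, Sem (qf s j) (ys j).
  elim=> [|j IH]; first by apply/SemA; rewrite E0; apply/ofree_NO.
  move: IH; rewrite {1}(Hc j) => /(trans_lem _ _ (Hlt j)); rewrite /nextP /=.
  by case: (delta _ _).
exists (qf s); split => // j.
have := HS j; rewrite {1}(Hc j) => /(trans_lem _ _ (Hlt j)); rewrite /nextP /=.
by case: (delta _ _).
Qed.

Lemma Sem_Tw_ABD q a : (q = A \/ q = B \/ q = D) -> Sem q (Tw a).
Proof.
case=> [->|[->|->]]; split => //.
- by move: (@NO_Tw a); apply: NO_ext => n; rewrite /= P0.
- exact: NO_Tw1.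
- exact: NO_Tw1.
Qed.

Lemma Sem_Tw_JK q : (q = J \/ q = K) -> Sem q (Tw false).
Proof. by case=> ->; split => //; apply: NO_Tw1. Qed.

Lemma Sem_Tw_GH q : (q = G \/ q = H) -> Sem q (Tw true).
Proof. by case=> ->; split => //; apply: NO_Tw1. Qed.

Lemma good q : exists z, Sem q z.
Proof.
have SF : Sem F (prepend (pref 3) (mu (Tw true))).
  by apply/(trans_lem F _ (isT : 3 < 5)); rewrite /nextP /=; apply: Sem_Tw_GH; left.
have SI : Sem I (prepend (pref 1) (mu (Tw false))).
  by apply/(trans_lem I _ (isT : 1 < 5)); rewrite /nextP /=; apply: Sem_Tw_JK; left.
case: q.
- by exists (Tw false); apply: Sem_Tw_ABD; left.
- by exists (Tw false); apply: Sem_Tw_ABD; right; left.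
- exists (prepend (pref 0) (mu (prepend (pref 3) (mu (Tw true))))).
  by apply/(trans_lem C _ (isT : 0 < 5)); rewrite /nextP /=.
- by exists (Tw false); apply: Sem_Tw_ABD; right; right.
- exists (prepend (pref 0) (mu (prepend (pref 1) (mu (Tw false))))).
  by apply/(trans_lem E _ (isT : 0 < 5)); rewrite /nextP /=.
- by eexists; apply: SF.
- by exists (Tw true); apply: Sem_Tw_GH; left.
- by exists (Tw true); apply: Sem_Tw_GH; right.
- by eexists; apply: SI.
- by exists (Tw false); apply: Sem_Tw_JK; left.
- by exists (Tw false); apply: Sem_Tw_JK; right.
Qed.

Lemma Gw_diff s k : forall j z z', z 0 <> z' 0 -> exists n, Gw s j k z n <> Gw s j k z' n.
Proof.
elim: k => [|k IH] j z z' Hz; first by exists 0.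
case: (IH j.+1 z z' Hz) => n Hn.
exists (size (pref (s j)) + n.*2) => /=.
rewrite /prepend.
have -> : (size (pref (s j)) + n.*2 < size (pref (s j))) = false by rewrite ltnNge leq_addr.
by rewrite addKn /mu odd_double doubleK.
Qed.

Definition coding_pw (s : nat -> nat) (ys : nat -> word) : Prop :=
  forall j n, ys j n = prepend (pref (s j)) (mu (ys j.+1)) n.

Lemma coding_pw_of s ys : coding_seq s ys -> coding_pw s ys.
Proof. by case=> _ Hc j n; rewrite {1}(Hc j). Qed.

Lemma coding_Gw s ys : coding_pw s ys -> forall k j n, ys j n = Gw s j k (ys (j + k)) n.
Proof.
move=> Hc; elim=> [|k IH] j n; first by rewrite addn0.
rewrite Hc /=; apply: prepend_mu_ext => m.
by rewrite IH addSn addnS.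
Qed.

From Stdlib Require Import FunctionalExtensionality.

Lemma codes_with_Tw s c a : (forall j, s j < 5) -> zero_from s c ->
  codes_with s c (Tw a) (Gw s 0 c (Tw a)).
Proof.
move=> Hlt Hz.
exists (fun j => if j <= c then Gw s j (c - j) (Tw a) else Tw a).
split; first by rewrite /= subn0.
split; first by rewrite leqnn subnn.
split => // j; apply: functional_extensionality => n.
case: (leqP j.+1 c) => Hj.
  by rewrite (ltnW Hj) -subnSK.
case: (leqP j c) => Hj2.
  have Ejc : j = c by apply/eqP; rewrite eqn_leq Hj2.
  by rewrite Ejc subnn /= (Hz c (leqnn c)) P0 Tw_mu.
by rewrite (Hz j (ltnW Hj2)) P0 Tw_mu.
Qed.

Lemma tail_Tw s ys c : coding_pw s ys -> zero_from s c -> forall n, ys c n = Tw (ys c 0) n.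
Proof.
move=> Hc Hz.
have Hstep : forall d n, ys (c + d) n = mu (ys (c + d).+1) n.
  by move=> d n; rewrite Hc (Hz (c + d) (leq_addr _ _)) P0.
have H0 : forall d, ys (c + d) 0 = ys c 0.
  elim=> [|d IH]; first by rewrite addn0.
  by rewrite -IH [RHS]Hstep addnS /mu /=.
suff : forall n d, ys (c + d) n = Tw (ys c 0) n by move=> H n; rewrite -(H n 0) addn0.
move=> n; elim: n {-2}n (leqnn n) => [|m IH] n Hn d.
  by case: n Hn => // _; rewrite H0.
case: n Hn => [|n] Hn; first by rewrite H0.
rewrite Hstep Tw_mu /mu -addnS IH //.
by rewrite -ltnS (leq_ltn_trans _ Hn) // leq_half_double ltnS -addnn leq_addr.
Qed.

Lemma part2b (s : nat -> nat) (q : nat -> state) :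
  path_from_A s q ->
  forall c, zero_from s c ->
         exists xt xtb : word,
           codes_with s c thue xt /\ codes_with s c thue_bar xtb /\
           (exists n, xt n <> xtb n) /\
           (forall x, codes s x -> (forall n, x n = xt n) \/ (forall n, x n = xtb n)) /\
           ((q c = A \/ q c = B \/ q c = D) -> overlap_free xt /\ overlap_free xtb) /\
           ((q c = J \/ q c = K) -> overlap_free xt /\ ~ overlap_free xtb) /\
           ((q c = G \/ q c = H) -> ~ overlap_free xt /\ overlap_free xtb).
Proof.
move=> [Hq0 Hq] c Hz.
have Hlt := s_lt5 Hq.
exists (Gw s 0 c (Tw false)), (Gw s 0 c (Tw true)).
have OF : forall a, Sem (q c) (Tw a) -> overlap_free (Gw s 0 c (Tw a)).
  move=> a HS; apply/ofree_NO/SemA; rewrite -Hq0.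
  by apply: (Sem_up Hq); rewrite add0n.
have NOF : forall a, ~ Sem (q c) (Tw a) -> ~ overlap_free (Gw s 0 c (Tw a)).
  move=> a HS /ofree_NO /SemA; rewrite -Hq0 => H; apply: HS.
  by have := Sem_down Hq H; rewrite add0n.
split; first exact: codes_with_Tw.
split; first exact: codes_with_Tw.
split; first by apply: Gw_diff.
split.
  move=> x [ys [E0 Hc]].
  have Hc' := coding_pw_of Hc.
  have HT := tail_Tw Hc' Hz.
  have Hx : forall n, x n = Gw s 0 c (Tw (ys c 0)) n.
    move=> n; rewrite -E0 (coding_Gw Hc' c 0 n) add0n.
    exact: Gw_ext.
  by case: (ys c 0) Hx => Hx; [right|left].
split.
  by move=> Hs; split; apply: OF; apply: Sem_Tw_ABD.
split.
  move=> Hs; split; first by apply: OF; apply: Sem_Tw_JK.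
  by apply: NOF => [[_]]; case: Hs => ->.
move=> Hs; split; last by apply: OF; apply: Sem_Tw_GH.
by apply: NOF => [[_]]; case: Hs => ->.
Qed.

From Stdlib Require Import Classical ClassicalEpsilon.

Section NotEv.
Variable s : nat -> nat.
Hypothesis Hlt : forall j, s j < 5.
Hypothesis Hnz : forall j, exists d, s (j + d) <> 0.

Local Notation sz j := (size (pref (s j))).

Lemma sz_pos j : s j <> 0 -> 0 < sz j.
Proof. by have := Hlt j; case: (s j) => [|[|[|[|[|]]]]]. Qed.

Lemma ind_jn (P : nat -> nat -> Prop) :
  (forall j n, n < sz j -> P j n) ->
  (forall j n, sz j <= n -> P j.+1 (n - sz j)./2 -> P j n) ->
  forall j n, P j n.
Proof.
move=> Hb Hs j n; elim: n {-2}n (leqnn n) j => [|m IH] n Hn j.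
  have -> : n = 0 by case: n Hn.
  case: (Hnz j) => d; elim: d j => [|d IHd] j Hd.
    by apply: Hb; apply: sz_pos; rewrite addn0 in Hd.
  case: (ltnP 0 (sz j)) => H; first by apply: Hb.
  apply: Hs => //; rewrite sub0n /=.
  by apply: IHd; rewrite addSn -addnS.
case: (ltnP n (sz j)) => H; first by apply: Hb.
apply: Hs => //; apply: IH.
have : (n - sz j)./2 <= n./2 by apply: half_leq; apply: leq_subr.
move=> H2; apply: (leq_trans H2).
by rewrite leq_half_double; apply: (leq_trans Hn); rewrite ltnS -addnn leq_addr.
Qed.

Fixpoint Yf (N j n : nat) : bool :=
  match N with
  | 0 => false
  | N.+1 => if n < sz j then nth false (pref (s j)) n
            else if odd (n - sz j) then ~~ Yf N j.+1 (n - sz j)./2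
                 else Yf N j.+1 (n - sz j)./2
  end.

Lemma Yf_stab j n : exists N0, forall N, N0 <= N -> Yf N j n = Yf N0 j n.
Proof.
apply: (ind_jn (P := fun j n => exists N0, forall N, N0 <= N -> Yf N j n = Yf N0 j n)).
  move=> j' n' H; exists 1; case=> // N _ /=; by rewrite H.
move=> j' n' H [N1 HN1]; exists N1.+1; case=> // N HN /=.
rewrite ltnNge H /= HN1 //.
Qed.

Definition Nsel j n : nat := proj1_sig (constructive_indefinite_description _ (Yf_stab j n)).

Lemma Nsel_spec j n N : Nsel j n <= N -> Yf N j n = Yf (Nsel j n) j n.
Proof. rewrite /Nsel; case: (constructive_indefinite_description _ _) => /= N0 H; exact: H. Qed.

Definition Ylim : nat -> word := fun j n => Yf (Nsel j n) j n.

Lemma Ylim_coding : coding_pw s Ylim.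
Proof.
move=> j n.
set n' := (n - sz j)./2.
set N := (maxn (maxn (Nsel j n) (Nsel j.+1 n')) 1).
have HN1 : Nsel j n <= N.+1 by rewrite ltnW // ltnS /N leq_max leq_max leqnn.
have HN2 : Nsel j.+1 n' <= N by rewrite /N leq_max leq_max leqnn orbT.
rewrite /Ylim -(Nsel_spec HN1) /= /prepend /mu.
case: (ltnP n (sz j)) => // H.
by rewrite -/n' (Nsel_spec HN2).
Qed.


Lemma coding_uniq ys1 ys2 : coding_pw s ys1 -> coding_pw s ys2 ->
  forall j n, ys1 j n = ys2 j n.
Proof.
move=> H1 H2; apply: ind_jn => j n Hn.
  by rewrite H1 H2 /prepend Hn.
by move=> IH; rewrite H1 H2 /prepend /mu ltnNge Hn /= IH.
Qed.

Lemma Gw_dep j n : exists K, forall k, K <= k -> forall z z', Gw s j k z n = Gw s j k z' n.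
Proof.
apply: (ind_jn (P := fun j n => exists K, forall k, K <= k -> forall z z', Gw s j k z n = Gw s j k z' n)).
  move=> j' n' H; exists 1; case=> // k _ z z' /=; by rewrite /prepend H.
move=> j' n' H [K HK]; exists K.+1; case=> // k Hk z z' /=.
by rewrite /prepend /mu ltnNge H /= (HK k Hk z z').
Qed.

Lemma Gw_dep_all L : exists K, forall n, n <= L -> forall k, K <= k ->
  forall z z', Gw s 0 k z n = Gw s 0 k z' n.
Proof.
elim: L => [|L [K1 HK1]].
  case: (Gw_dep 0 0) => K HK; exists K => n Hn; have -> : n = 0 by case: n Hn.
  exact: HK.
case: (Gw_dep 0 L.+1) => K2 HK2; exists (maxn K1 K2) => n Hn k Hk z z'.
case: (leqP n L) => H.
  by apply: HK1 => //; apply: leq_trans Hk; rewrite leq_max leqnn.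
have -> : n = L.+1 by apply/eqP; rewrite eqn_leq Hn H.
by apply: HK2; apply: leq_trans Hk; rewrite leq_max leqnn orbT.
Qed.

Lemma Ylim_NO (q : nat -> state) : q 0 = A -> (forall j, delta (q j) (s j) = Some (q j.+1)) ->
  NO (Ylim 0).
Proof.
move=> Hq0 Hq i p Hp Ho.
case: (Gw_dep_all (i + p + p)) => K HK.
case: (good (q K)) => z Hz.
have HS : Sem A (Gw s 0 K z) by rewrite -Hq0; apply: (Sem_up Hq); rewrite add0n.
have HN := proj1 (SemA _) HS.
have Eq : forall m, m <= i + p + p -> Ylim 0 m = Gw s 0 K z m.
  move=> m Hm; rewrite (coding_Gw Ylim_coding K 0 m) add0n.
  exact: HK.
apply: (HN i p Hp) => k Hk.
rewrite -!Eq; first exact: Ho.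
- by rewrite leq_add2r leq_add2l.
- by apply: (leq_trans _ (leq_addr p _)); rewrite leq_add2l.
Qed.
End NotEv.

Lemma part2a (s : nat -> nat) (q : nat -> state) :
  path_from_A s q ->
  (~ (exists c, zero_from s c)) ->
  exists x, codes s x /\ overlap_free x /\ forall x', codes s x' -> forall n, x' n = x n.
Proof.
move=> [Hq0 Hq] Hev.
have Hlt := s_lt5 Hq.
have Hnz : forall j, exists d, s (j + d) <> 0.
  move=> j; apply: NNPP => H; apply: Hev; exists j => m Hm.
  apply: NNPP => Hne; apply: H; exists (m - j); rewrite subnKC // => E; apply: Hne; rewrite E.
exists (Ylim Hlt Hnz 0); split.
  exists (Ylim Hlt Hnz); split => //; split => // j.
  by apply: functional_extensionality => n; apply: Ylim_coding.
split; first by apply/ofree_NO; apply: (Ylim_NO Hq0 Hq).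
move=> x' [ys [E0 Hc]] n.
rewrite -E0; apply: coding_uniq => //; first exact: coding_pw_of.
exact: Ylim_coding.
Qed.

Theorem theorem3 :
  (* (1) *)
  (forall (x : word) (s : nat -> nat),
      overlap_free x -> is_code s x -> is_path_label s) /\
  (* (2) *)
  (forall (s : nat -> nat) (q : nat -> state),
      path_from_A s q ->
      ((~ (exists c, zero_from s c)) ->
         exists x, codes s x /\ overlap_free x /\
                   forall x', codes s x' -> forall n, x' n = x n) /\
      (* 0-based c here = paper c - 1: s j = i_(j+1); ys c = y_(c_paper - 1); q c = state before reading i_(c_paper) *)
      (forall c, zero_from s c ->
         exists xt xtb : word,
           codes_with s c thue xt /\ codes_with s c thue_bar xtb /\
           (exists n, xt n <> xtb n) /\
           (forall x, codes s x -> (forall n, x n = xt n) \/ (forall n, x n = xtb n)) /\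
           ((q c = A \/ q c = B \/ q c = D) -> overlap_free xt /\ overlap_free xtb) /\
           ((q c = J \/ q c = K) -> overlap_free xt /\ ~ overlap_free xtb) /\
           ((q c = G \/ q c = H) -> ~ overlap_free xt /\ overlap_free xtb))).
Proof.
split; first exact: part1.
move=> s q Hp; split; first exact: (part2a Hp).
exact: (part2b Hp).
Qed.
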